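(* Let $u\le v$ in $S_n$ and let $I\subset[u,v]$ be a nonempty order ideal that is diamond-closed in $[u,v]$. Let $A_I$ be the set of atoms of $[u,v]$ (elements covering $u$) that lie in $I$. Then $I=\mathrm{dc}_{[u,v]}(\{u\}\cup A_I)$.
   Context: $S_n$ is the symmetric group with length $\ell$ (w.r.t. simple reflections $s_i=(i\ i{+}1)$), $T$ its transpositions. The Bruhat graph $\Gamma$ has vertex set $S_n$ and edges $w\to tw$ whenever $t\in T$, $\ell(w)<\ell(tw)$; Bruhat order is reachability in $\Gamma$. A diamond is a subgraph of $\Gamma$ with four distinct vertices $x_1,\dots,x_4$ and edges $x_1\to x_2\to x_4$, $x_1\to x_3\to x_4$. For $X\subset Y\subset S_n$, $X$ is diamond-closed in $Y$ if whenever $X$ contains three vertices of a diamond contained in $Y$ it contains the fourth. The diamond closure $\mathrm{dc}_Y(X)$ is the intersection of all sets $D$ with $X\subset D\subset Y$ that are diamond-closed in $Y$. *)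

(* Defs.v *)
From mathcomp Require Import all_boot all_fingroup.
Set Implicit Arguments. Unset Strict Implicit. Unset Printing Implicit Defensive.

Section Bruhat.
Variable n : nat.
Local Notation Sn := {perm 'I_n}.

(* Coxeter length of w w.r.t. simple reflections = number of inversions. *)
Definition len (w : Sn) : nat :=
  #|[set p : 'I_n * 'I_n | (p.1 < p.2) && (w p.2 < w p.1)]|.

Definition is_transposition (t : Sn) : bool :=
  [exists i : 'I_n, exists j : 'I_n, (i != j) && (t == tperm i j)].

(* Bruhat graph edge w -> t w.  In mathcomp, (w * t) x = t (w x), i.e. the
   function composition t o w, which is the product "t w" of the paper. *)
Definition bedge (w x : Sn) : bool :=
  [exists t : Sn, is_transposition t && (x == w * t)%g] && (len w < len x).

Definition bruhat_le (x y : Sn) : bool := connect bedge x y.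

Definition interval (u v : Sn) : {set Sn} := [set x | bruhat_le u x && bruhat_le x v].

Definition diamond (x1 x2 x3 x4 : Sn) : bool :=
  uniq [:: x1; x2; x3; x4] &&
  [&& bedge x1 x2, bedge x2 x4, bedge x1 x3 & bedge x3 x4].

Definition diamond_closed (Y X : {set Sn}) : bool :=
  [forall x1 : Sn, forall x2 : Sn, forall x3 : Sn, forall x4 : Sn,
    (diamond x1 x2 x3 x4 && [&& x1 \in Y, x2 \in Y, x3 \in Y & x4 \in Y]) ==>
    [&& (x2 \in X) && (x3 \in X) && (x4 \in X) ==> (x1 \in X),
        (x1 \in X) && (x3 \in X) && (x4 \in X) ==> (x2 \in X),
        (x1 \in X) && (x2 \in X) && (x4 \in X) ==> (x3 \in X) &
        (x1 \in X) && (x2 \in X) && (x3 \in X) ==> (x4 \in X)]].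

Definition dclosure (Y X : {set Sn}) : {set Sn} :=
  [set z | [forall D : {set Sn},
     [&& X \subset D, D \subset Y & diamond_closed Y D] ==> (z \in D)]].

Definition order_ideal_in (Y I : {set Sn}) : Prop :=
  I \subset Y /\ forall x y, x \in Y -> y \in I -> bruhat_le x y -> x \in I.

Definition covers (u x : Sn) : bool := bruhat_le u x && (len x == (len u).+1).

End Bruhat.

(* Main.v *)
Require Import Defs.
From mathcomp Require Import all_boot all_fingroup.
From mathcomp Require Import zify.
Set Implicit Arguments. Unset Strict Implicit. Unset Printing Implicit Defensive.

Section L.
Variable n : nat.
Local Notation Sn := {perm 'I_n}.

Definition ee (f : 'I_n -> 'I_n) (p q : 'I_n) : nat := ((p < q) && (f q < f p)).

Lemma lenE (w : Sn) : len w = \sum_(p : 'I_n) \sum_(q : 'I_n) ee w p q.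
Proof.
rewrite /len -sum1_card big_mkcond /= pair_big /=.
by apply: eq_bigr => p _; rewrite inE /ee; case: (_ && _).
Qed.

Lemma sum2 (H : 'I_n -> nat) (i j : 'I_n) : i != j ->
  \sum_p H p = H i + H j + \sum_(p | (p != i) && (p != j)) H p.
Proof.
move=> ij; rewrite (bigD1 i) //= (bigD1 j) /=; last by rewrite eq_sym.
by rewrite addnA; congr (_ + _); apply: eq_bigl => p; rewrite andbC.
Qed.

Lemma decomp (F : 'I_n -> 'I_n -> nat) (i j : 'I_n) : i != j ->
  \sum_p \sum_q F p q = F i i + F i j + F j i + F j j +
    \sum_(q | (q != i) && (q != j)) (F i q + F j q + F q i + F q j) +
    \sum_(p | (p != i) && (p != j)) \sum_(q | (q != i) && (q != j)) F p q.
Proof.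
move=> ij.
under eq_bigr => p _ do rewrite (sum2 (F p) ij).
rewrite (sum2 (fun p => F p i + F p j + _) ij).
rewrite !big_split /=. lia.
Qed.

Lemma natq (i j q A B C : nat) : i < j -> A < B -> q != i -> q != j -> C != A -> C != B ->
 ((i<q)&&(C<B)) + ((j<q)&&(C<A)) + ((q<i)&&(B<C)) + ((q<j)&&(A<C)) =
 ((i<q)&&(C<A)) + ((j<q)&&(C<B)) + ((q<i)&&(A<C)) + ((q<j)&&(B<C)) +
  ((i<q<j)&&(A<C<B)) + ((i<q<j)&&(A<C<B)).
Proof.
move=> *; case: (ltngtP i q); case: (ltngtP j q); case: (ltngtP C A); case: (ltngtP C B) => /=; lia.
Qed.

Lemma len_tp (w : Sn) (i j : 'I_n) : i < j -> w i < w j ->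
  len (tperm i j * w)%g = len w + 1 +
    2 * #|[set k : 'I_n | (i < k < j) && (w i < w k < w j)]|.
Proof.
move=> lij wij.
have ij : i != j by rewrite -val_eqE /= neq_ltn lij.
rewrite !lenE !(decomp _ ij).
have xi : (tperm i j * w)%g i = w j by rewrite permM tpermL.
have xj : (tperm i j * w)%g j = w i by rewrite permM tpermR.
have xq : forall q, q != i -> q != j -> (tperm i j * w)%g q = w q.
  by move=> q qi qj; rewrite permM tpermD // eq_sym.
have -> : \sum_(p | (p != i) && (p != j)) \sum_(q | (q != i) && (q != j)) ee (tperm i j * w)%g p q
  = \sum_(p | (p != i) && (p != j)) \sum_(q | (q != i) && (q != j)) ee w p q.
  apply: eq_bigr => p /andP[pi pj]; apply: eq_bigr => q /andP[qi qj].
  by rewrite /ee !xq.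
have -> : #|[set k : 'I_n | (i < k < j) && (w i < w k < w j)]| =
   \sum_(q | (q != i) && (q != j)) (((i < q < j) && (w i < w q < w j)) : nat).
  rewrite -sum1_card big_mkcond /= (sum2 _ ij) !inE !ltnn !andbF /= add0n.
  by apply: eq_bigr => q _; rewrite inE; case: (_ && _).
rewrite (eq_bigr (fun q => (ee w i q + ee w j q + ee w q i + ee w q j) +
   (((i < q < j) && (w i < w q < w j)) : nat) + (((i < q < j) && (w i < w q < w j)) : nat))); last first.
  move=> q /andP[qi qj]; rewrite /ee xi xj !xq // natq //.
  - by apply: contra qi => /eqP /ord_inj /perm_inj ->.
  - by apply: contra qj => /eqP /ord_inj /perm_inj ->.
rewrite !big_split /= /ee xi xj !ltnn /= lij wij.
have -> : (j < i) = false by apply/negbTE; rewrite -leqNgt ltnW.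
rewrite /=. lia.
Qed.

Lemma len_lt_tp (w : Sn) (i j : 'I_n) : i != j ->
  (len w < len (tperm i j * w)%g) = ((i < j) == (w i < w j)).
Proof.
wlog lij : i j / i < j.
  move=> H ij; case: (ltngtP i j) => [l|l|e].
  - by rewrite (H i j l ij) l.
  - rewrite tpermC (H j i l); last by rewrite eq_sym.
    rewrite l.
    have wne : (w i : nat) != w j.
      by apply: contra ij => /eqP /ord_inj /perm_inj ->.
    by case: (ltngtP (w i) (w j)) wne.
  - by move: ij; rewrite -val_eqE /= e eqxx.
move=> ij; rewrite lij /=.
case: (ltngtP (w i) (w j)) => [wl|wl|e].
- by rewrite len_tp //; lia.
- set x := (tperm i j * w)%g.
  have wx : w = (tperm i j * x)%g by rewrite /x mulgA tperm2 mul1g.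
  have xi : x i = w j by rewrite permM tpermL.
  have xj : x j = w i by rewrite permM tpermR.
  rewrite [in len w]wx len_tp // ?xi ?xj //.
  apply/negbTE; rewrite -leqNgt; lia.
- by move: ij; rewrite (perm_inj (ord_inj e)) eqxx.
Qed.

Lemma mul_tp (w : Sn) (a b : 'I_n) :
  (w * tperm a b = tperm ((w^-1)%g a) ((w^-1)%g b) * w)%g.
Proof.
apply/permP => k; rewrite !permM.
case: (tpermP ((w^-1)%g a) ((w^-1)%g b) k) => [->|->|ka kb]; rewrite ?permKV ?tpermL ?tpermR //.
rewrite tpermD //.
- by apply/eqP => e; apply: ka; rewrite e permK.
- by apply/eqP => e; apply: kb; rewrite e permK.
Qed.

Lemma edge_crit (w : Sn) (a b : 'I_n) : a != b ->
  (len w < len (w * tperm a b)%g) = (((w^-1)%g a < (w^-1)%g b) == (a < b)).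
Proof.
move=> ab; rewrite mul_tp len_lt_tp ?permKV //.
by apply: contra ab => /eqP /perm_inj ->.
Qed.

Lemma bedge_tp (w : Sn) (a b : 'I_n) : a != b ->
  ((w^-1)%g a < (w^-1)%g b) == (a < b) -> bedge w (w * tperm a b)%g.
Proof.
move=> ab cr; rewrite /bedge edge_crit // cr andbT.
apply/existsP; exists (tperm a b); rewrite eqxx andbT.
by apply/existsP; exists a; apply/existsP; exists b; rewrite ab eqxx.
Qed.

Lemma edge_tp (w : Sn) (a b : 'I_n) : a != b ->
  bedge w (w * tperm a b)%g -> ((w^-1)%g a < (w^-1)%g b) == (a < b).
Proof. by move=> ab /andP[_]; rewrite edge_crit. Qed.

Lemma bedge_len (x y : Sn) : bedge x y -> len x < len y.
Proof. by case/andP. Qed.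

Lemma bedgeP (x y : Sn) : bedge x y ->
  exists a b, [/\ a != b, y = (x * tperm a b)%g & len x < len y].
Proof.
case/andP => /existsP[t /andP[/existsP[a /existsP[b /andP[ab /eqP ->]]] /eqP ->]] l.
by exists a, b.
Qed.

Lemma connect_len (x y : Sn) : connect (@bedge n) x y -> len x <= len y.
Proof.
case/connectP => p; elim: p x => [|z p IH] x /=; first by move=> _ ->.
case/andP => /bedge_len l pp ye; apply: leq_trans (ltnW l) (IH _ pp ye).
Qed.

Lemma connect_last (x y : Sn) : connect (@bedge n) x y -> x != y ->
  exists2 z, connect (@bedge n) x z & bedge z y.
Proof.
case/connectP => p; elim/last_ind: p => [|p z _] /=.
  by move=> _ ->; rewrite eqxx.
rewrite rcons_path last_rcons => /andP[pp e] -> _.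
by exists (last x p) => //; apply/connectP; exists p.
Qed.

Lemma tpE (x y z : 'I_n) : tperm x y z = if z == x then y else if z == y then x else z.
Proof. by case: tpermP => [->|->|/eqP/negbTE -> /eqP/negbTE ->]; rewrite ?eqxx //; case: eqP. Qed.
Ltac R := rewrite ?eqxx /=; repeat match goal with
  | H : is_true (?x != ?y) |- context[?x == ?y] =>
      first [rewrite (negbTE H) /= | rewrite (@negbTE (x == y :> 'I_n) H) /=]
  | H : is_true (?x != ?y) |- context[?y == ?x] =>
      first [rewrite [y == x]eq_sym (negbTE H) /= |
             rewrite [(y == x :> 'I_n)]eq_sym (@negbTE (x == y :> 'I_n) H) /=]
  end; rewrite ?eqxx //=.

Ltac solve_perm a b c v :=
  rewrite !permM !tpE; R;
  case: (v =P a) => [?|/eqP ?]; [subst v; R |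
  case: (v =P b) => [?|/eqP ?]; [subst v; R |
  case: (v =P c) => [?|/eqP ?]; [subst v; R | R]]]; try R.

Lemma t1 (a b c : 'I_n) : a != b -> b != c -> a != c ->
  (tperm a b * tperm b c = tperm a c * tperm a b)%g.
Proof. move=> ab bc ac. apply/permP => v; solve_perm a b c v. Qed.
Lemma t2 (a b c : 'I_n) : a != b -> b != c -> a != c ->
  (tperm a b * tperm b c = tperm b c * tperm a c)%g.
Proof. move=> ab bc ac. apply/permP => v; solve_perm a b c v. Qed.
Lemma bool3 (a b c Pa Pb Pc : nat) : a != b -> b != c -> a != c ->
  Pa != Pb -> Pb != Pc -> Pa != Pc ->
  (Pa < Pb) == (a < b) -> (Pa < Pc) == (b < c) ->
  ((Pa < Pc) == (a < c)) && ((Pc < Pb) == (a < b)) ||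
  ((Pb < Pc) == (b < c)) && ((Pa < Pb) == (a < c)).
Proof.
move=> *; case: (ltngtP a b); case: (ltngtP b c); case: (ltngtP a c);
 case: (ltngtP Pa Pb); case: (ltngtP Pb Pc); case: (ltngtP Pa Pc) => //=; lia.
Qed.

Lemma neq_nat (a b : 'I_n) : a != b -> (a : nat) != b.
Proof. by []. Qed.

Lemma neq_pos (q : Sn) (a b : 'I_n) : a != b -> ((q^-1)%g a : nat) != (q^-1)%g b.
Proof. by move=> ab; apply: neq_nat; rewrite (inj_eq perm_inj). Qed.

Lemma D3 (q : Sn) (a b c : 'I_n) : a != b -> b != c -> a != c ->
  bedge q (q * tperm a b)%g -> bedge (q * tperm a b)%g (q * tperm a b * tperm b c)%g ->
  exists y, [/\ bedge q y, bedge y (q * tperm a b * tperm b c)%g & y != (q * tperm a b)%g].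
Proof.
move=> ab bc ac /(edge_tp ab) E1 /(edge_tp bc).
rewrite invMg tpermV !permM !tpE; R => E2.
have := bool3 (neq_nat ab) (neq_nat bc) (neq_nat ac) (neq_pos q ab) (neq_pos q bc)
  (neq_pos q ac) E1 E2 => /orP[/andP[G1 G2]|/andP[G1 G2]].
- exists (q * tperm a c)%g; split.
  + by apply: bedge_tp.
  + rewrite -mulgA t1 // mulgA; apply: bedge_tp => //.
    by rewrite invMg tpermV !permM !tpE; R.
  + apply/eqP => /mulgI /permP /(_ a); rewrite !tpE eqxx => e.
    by move: bc; rewrite e eqxx.
- exists (q * tperm b c)%g; split.
  + by apply: bedge_tp.
  + rewrite -mulgA t2 // mulgA; apply: bedge_tp => //.
    by rewrite invMg tpermV !permM !tpE; R.
  + apply/eqP => /mulgI /permP /(_ c); rewrite !tpE; R => e.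
    by move: bc; rewrite e eqxx.
Qed.

Lemma tcomm (a b c d : 'I_n) : a != b -> c != d -> c != a -> c != b -> d != a -> d != b ->
  (tperm a b * tperm c d = tperm c d * tperm a b)%g.
Proof.
move=> *; apply/permP => v; rewrite !permM !tpE; R.
case: (v =P a) => [?|/eqP ?]; [subst v; R|].
case: (v =P b) => [?|/eqP ?]; [subst v; R|].
case: (v =P c) => [?|/eqP ?]; [subst v; R|].
case: (v =P d) => [?|/eqP ?]; [subst v; R|R].
Qed.

Lemma Dlem (q p x : Sn) : bedge q p -> bedge p x -> exists y, [/\ bedge q y, bedge y x & y != p].
Proof.
move=> qp px; have Lqp := bedge_len qp; have Lpx := bedge_len px.
case/bedgeP: (qp) => a [b [ab ep _]]; subst p.
case/bedgeP: (px) => c [d [cd ex _]]; subst x.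
case: (eqVneq c a) => [ca|nca].
  subst c; case: (eqVneq d b) => [db|ndb].
    by subst d; move: Lpx; rewrite -mulgA tperm2 mulg1; lia.
  rewrite [tperm a b]tpermC in qp px *.
  by apply: D3 => //; rewrite eq_sym.
case: (eqVneq c b) => [cb|ncb].
  subst c; case: (eqVneq d a) => [da|nda].
    by subst d; move: Lpx; rewrite [tperm b a]tpermC -mulgA tperm2 mulg1; lia.
  by apply: D3 => //; rewrite eq_sym.
case: (eqVneq d a) => [da|nda].
  subst d; rewrite [tperm c a]tpermC [tperm a b]tpermC in qp px *.
  by apply: D3 => //; rewrite eq_sym.
case: (eqVneq d b) => [db|ndb].
  subst d; rewrite [tperm c b]tpermC in qp px *.
  by apply: D3 => //; rewrite eq_sym.
move: (edge_tp ab qp) (edge_tp cd px) => E1.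
rewrite invMg tpermV !permM !tpE; R => E2.
exists (q * tperm c d)%g; split.
- by apply: bedge_tp.
- rewrite -mulgA tcomm // mulgA; apply: bedge_tp => //.
  by rewrite invMg tpermV !permM !tpE; R.
- apply/eqP => /mulgI /permP /(_ a); rewrite !tpE; R => e.
  by move: ab; rewrite e eqxx.
Qed.

Lemma bT (P Q : bool) : P -> Q -> P == Q.
Proof. by move=> -> ->. Qed.
Lemma bF (P Q : bool) : ~~ P -> ~~ Q -> P == Q.
Proof. by move=> /negbTE -> /negbTE ->. Qed.

Lemma Clem (u x : Sn) : bedge u x -> len x != (len u).+1 ->
  exists z y1 y2, [/\ connect (@bedge n) u z, bedge z y1, bedge y1 x, bedge z y2
     & bedge y2 x] /\ y1 != y2.
Proof.
move=> ux; case/bedgeP: (ux) => a [b [ab ex Lux]]; subst x.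
wlog lab : a b ab ux Lux / a < b.
  move=> H; case: (ltngtP a b) => [l|l|e]; first exact: H.
  - rewrite tpermC in ux Lux *; apply: H => //; by rewrite eq_sym.
  - by move: ab; rewrite (ord_inj e) eqxx.
move=> nc.
have {}ab : a != b :> 'I_n := ab.
have E1 := edge_tp ab ux; rewrite lab in E1; move/eqP: E1 => E1.
have L := len_tp E1 (_ : u ((u^-1)%g a) < u ((u^-1)%g b)).
rewrite !permKV -mul_tp in L; move/(_ lab): L => L.
have : 0 < #|[set k : 'I_n | ((u^-1)%g a < k < (u^-1)%g b) && (a < u k < b)]|.
  by rewrite lt0n; apply: contra nc; rewrite L => /eqP ->; rewrite muln0 addn0 addn1.
rewrite card_gt0 => /set0Pn [k]; rewrite inE => /andP[/andP[ik kj] /andP[ak kb]].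
set c := u k in ak kb *.
have kc : (u^-1)%g c = k by rewrite /c permK.
have ac : a != c :> 'I_n by apply/negP => /eqP e; rewrite e ltnn in ak.
have cb : c != b :> 'I_n by apply/negP => /eqP e; rewrite e ltnn in kb.
have bc : b != c :> 'I_n by rewrite eq_sym.
exists (u * tperm a c)%g, (u * tperm a c * tperm a b)%g, (u * tperm a c * tperm c b)%g; split; [split|].
- apply: connect1; apply: bedge_tp => //; rewrite kc; apply: bT => //.
- apply: bedge_tp => //; rewrite invMg tpermV !permM !tpE; R; rewrite kc; apply: bT => //.
- have -> : (u * tperm a b = u * tperm a c * tperm a b * tperm b c)%g.
    rewrite -!mulgA; congr (_ * _)%g; apply/permP => v; solve_perm a b c v.
  apply: bedge_tp => //; rewrite invMg invMg !tpermV !permM !tpE; R; rewrite kc.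
  by apply: bF; rewrite -leqNgt ltnW.
- apply: bedge_tp => //; rewrite invMg tpermV !permM !tpE; R; apply: bT => //.
- have -> : (u * tperm a b = u * tperm a c * tperm c b * tperm a c)%g.
    rewrite -!mulgA; congr (_ * _)%g; apply/permP => v; solve_perm a b c v.
  apply: bedge_tp => //; rewrite invMg invMg !tpermV !permM !tpE; R; rewrite kc.
  by apply: bT.
- apply/eqP => /mulgI /permP /(_ a); rewrite !tpE; R => e.
  by move: ab; rewrite e eqxx.
Qed.

Lemma neq_len (x y : {perm 'I_n}) : len x < len y -> x != y.
Proof. by apply: contraTneq => ->; rewrite ltnn. Qed.
End L.


Theorem lemma4p2 (n : nat) (u v : {perm 'I_n}) (I : {set {perm 'I_n}}) :
  bruhat_le u v ->
  I != set0 ->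
  order_ideal_in (interval u v) I ->
  diamond_closed (interval u v) I ->
  I = dclosure (interval u v)
        (u |: [set a in I | covers u a]).
Proof.
move=> uv I0 [IY Iid] dcI.
have inY : forall x, (x \in interval u v) = bruhat_le u x && bruhat_le x v.
  by move=> x; rewrite inE.
have uI : u \in I.
  case/set0Pn: I0 => y yI; have := subsetP IY y yI; rewrite inY => /andP[uy _].
  by apply: (Iid u y) => //; rewrite inY uv andbT; apply: connect0.
apply/setP => x; rewrite /dclosure inE; apply/idP/idP.
- move=> xI0; apply/forallP => D; apply/implyP => /and3P[XD DY dcD].
  suff H : forall k x, len x < k -> x \in I -> x \in D by apply: (H (len x).+1 x).
  clear xI0 x; elim=> [//|k IH] x lx xI.
  have /andP[ux xv] : bruhat_le u x && bruhat_le x v by rewrite -inY (subsetP IY).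
  case: (eqVneq x u) => [->|xu].
    by apply: (subsetP XD); rewrite !inE eqxx.
  case cov: (covers u x).
    by apply: (subsetP XD); rewrite !inE xI cov orbT.
  suff [z [y1 [y2 [[uz zy1 y1x zy2 y2x] y12]]]] : exists z y1 y2,
      [/\ bruhat_le u z, bedge z y1, bedge y1 x, bedge z y2 & bedge y2 x] /\ y1 != y2.
    have inD : forall w, bruhat_le u w -> bruhat_le w x -> len w < len x -> w \in D.
      move=> w uw wx lw; apply: IH; first by apply: leq_trans lw _.
      apply: (Iid w x) => //; rewrite inY uw /=; exact: connect_trans wx xv.
    have uy1 : bruhat_le u y1 by apply: connect_trans uz (connect1 zy1).
    have uy2 : bruhat_le u y2 by apply: connect_trans uz (connect1 zy2).
    have L1 := bedge_len zy1; have L2 := bedge_len y1x.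
    have L3 := bedge_len zy2; have L4 := bedge_len y2x.
    have zD : z \in D.
      apply: inD => //; last by apply: ltn_trans L1 L2.
      exact: connect_trans (connect1 zy1) (connect1 y1x).
    have y1D : y1 \in D by apply: inD => //; apply: connect1.
    have y2D : y2 \in D by apply: inD => //; apply: connect1.
    have inYw : forall w, bruhat_le u w -> bruhat_le w x -> w \in interval u v.
      move=> w uw wx; rewrite inY uw /=; exact: connect_trans wx xv.
    move/forallP/(_ z)/forallP/(_ y1)/forallP/(_ y2)/forallP/(_ x)/implyP: dcD.
    case/(_ _)/and4P.
      apply/andP; split.
        rewrite /diamond /= !inE zy1 y1x zy2 y2x !andbT.
        rewrite (negbTE (neq_len L1)) (negbTE (neq_len L3)) (negbTE (neq_len (ltn_trans L1 L2))).
        by rewrite (negbTE y12) (negbTE (neq_len L2)) (neq_len L4).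
      rewrite !inYw //; try exact: connect1.
      - exact: connect0.
      - exact: connect_trans (connect1 zy1) (connect1 y1x).
    by move=> _ _ _ /implyP; apply; rewrite zD y1D y2D.
  have ux' : u != x by rewrite eq_sym.
  have [y uy yx] := connect_last ux ux'.
  case: (eqVneq y u) => [yu|yu].
    subst y; have nc : len x != (len u).+1.
      by move: cov; rewrite /covers ux /= => /negbT.
    have [z [y1 [y2 [[uz zy1 y1x zy2 y2x] y12]]]] := Clem yx nc.
    by exists z, y1, y2.
  have uy' : u != y by rewrite eq_sym.
  have [q uq qy] := connect_last uy uy'.
  have [y2 [qy2 y2x y2y]] := Dlem qy yx.
  by exists q, y, y2; split => //; rewrite eq_sym.
- move/forallP/(_ I)/implyP; apply; apply/and3P; split => //.
  apply/subsetP => y; rewrite !inE => /orP[/eqP -> //|/andP[] //].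
Qed.
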